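(* Let $\mathbb{F}_q$ have characteristic $p\neq2$, $f(X)=aX^2+c\in\mathbb{F}_q[X]$ with $a\ne0$, $r\ge1$, $k\ge 2$, and let $(x_1,\dots,x_k)\in\overline{\mathbb{F}_q}^{\,k}$ satisfy $f^r(x_1)=\dots=f^r(x_k)$. For distinct $i,j\in\{1,\dots,k\}$ let $d(i,j)=d(j,i)$ be the smallest $d\in\{-1,0,1,\dots,r-1\}$ with $\phi(x_i,x_j;d)=0$ (such $d$ exists). Then the complete weighted graph on $\{1,\dots,k\}$ with edge weights $d(i,j)$ is proper.
   Context: Iterates: $f^0(X)=X$, $f^{j+1}(X)=f(f^j(X))$. Define $\phi(X,Y;-1)=X-Y$ and $\phi(X,Y;d)=f^d(X)+f^d(Y)$ for integers $d\ge 0$. A $(D,k)$-graph is a weighted graph on $k$ vertices in which each edge $ij$ carries an integer weight $d(i,j)\in[-1,D]$; it is complete if every pair of distinct vertices is joined by an edge. A complete $(D,k)$-graph is proper if for all distinct vertices $a,b,c$ with $d(a,b)\le d(a,c)\le d(b,c)$ one has either $d(a,b)=d(a,c)=d(b,c)=-1$, or $d(a,b)<d(a,c)=d(b,c)$. *)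

(* Defs.v *)
From HB Require Import structures.
From mathcomp Require Import all_boot all_order all_algebra all_field.
Set Implicit Arguments. Unset Strict Implicit. Unset Printing Implicit Defensive.
Import Order.TTheory GRing.Theory Num.Theory.
Local Open Scope ring_scope.

Definition fquad {L : fieldType} (a c : L) (x : L) : L := a * x ^+ 2 + c.
Definition fiter {L : fieldType} (a c : L) (n : nat) (x : L) : L :=
  iter n (fquad a c) x.

(* phi(X,Y;-1) = X - Y ; phi(X,Y;d) = f^d(X) + f^d(Y) for d >= 0.
   (d is an integer; only d >= -1 is ever used.) *)
Definition phi {L : fieldType} (a c : L) (x y : L) (d : int) : L :=
  if (d < 0)%R then x - y else fiter a c `|d|%N x + fiter a c `|d|%N y.

Definition proper_graph (k : nat) (w : 'I_k -> 'I_k -> int) : Prop :=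
  forall u v t : 'I_k, u != v -> u != t -> v != t ->
    (w u v <= w u t)%R -> (w u t <= w v t)%R ->
    (w u v = -1 /\ w u t = -1 /\ w v t = -1)
    \/ ((w u v < w u t)%R /\ w u t = w v t).

Definition is_min_phi_zero {L : fieldType} (a c : L) (r : nat) (x y : L)
  (d : int) : Prop :=
  [/\ (-1 <= d)%R, (d <= (r%:Z - 1))%R, phi a c x y d = 0 &
      forall e : int, (-1 <= e)%R -> (e < d)%R -> phi a c x y e <> 0].

(* Main.v *)
Require Import Defs.
From HB Require Import structures.
From mathcomp Require Import all_boot all_order all_algebra all_field.
From mathcomp Require Import zify.
Import Order.TTheory GRing.Theory Num.Theory.
Local Open Scope ring_scope.

Set Implicit Arguments. Unset Strict Implicit.
Section Aux.
Variables (L : fieldType) (A C : L).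
Hypothesis HA : A != 0.

Definition P (x y : L) (m : nat) : bool := fiter A C m x == fiter A C m y.

Lemma fiterS n x : fiter A C n.+1 x = fquad A C (fiter A C n x).
Proof. by rewrite /fiter iterS. Qed.

Lemma fquad_eq u v : fquad A C u = fquad A C v -> u = v \/ u + v = 0.
Proof.
rewrite /fquad => /addIr /(mulfI HA) /eqP; rewrite eqf_sqr => /orP[/eqP->|/eqP->].
  by left.
by right; rewrite addNr.
Qed.

Lemma P_mono x y m n : (m <= n)%N -> P x y m -> P x y n.
Proof.
move=> /subnK <-; rewrite /P /fiter !iterD => /eqP ->; done.
Qed.

Lemma P_trans x y z m : P x y m -> P x z m -> P y z m.
Proof. by rewrite /P => /eqP <- /eqP ->. Qed.

Lemma phi_zero x y (e : int) : (-1 <= e) -> phi A C x y e = 0 -> P x y `|(e + 1)%R|%N.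
Proof.
rewrite /phi /P; case: ltrP => He1 He2 Hz.
  have -> : e = -1 by lia.
  by move: Hz => /eqP; rewrite subr_eq0.
have -> : `|(e + 1)%R|%N = `|e|%N.+1 by lia.
rewrite !fiterS /fquad.
have -> : fiter A C `|e| y = - fiter A C `|e| x.
  by apply/eqP; rewrite -addr_eq0 addrC Hz.
by rewrite sqrrN.
Qed.

Lemma charac x y (r g : nat) : P x y g -> (forall m, (m < g)%N -> ~~ P x y m) ->
  (g <= r)%N -> is_min_phi_zero A C r x y (g%:Z - 1).
Proof.
move=> Pg Hmin Hgr; split.
- lia.
- lia.
- rewrite /phi; case: g Pg Hmin Hgr => [|n] Pg Hmin Hgr.
    by rewrite /=; apply/eqP; rewrite subr_eq0.
  have -> : ((n.+1)%:Z - 1 < 0) = false by lia.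
  have -> : `|(n.+1)%:Z - 1|%N = n by lia.
  move: Pg; rewrite /P !fiterS => /eqP /fquad_eq [H|//].
  by move: (Hmin n (ltnSn n)); rewrite /P H eqxx.
- move=> e He1 He2 Hz; have Hp := @phi_zero x y e He1 Hz.
  have : (`|(e + 1)%R|%N < g)%N by lia.
  by move=> /Hmin; rewrite Hp.
Qed.

Lemma min_uniq x y r d d' : is_min_phi_zero A C r x y d -> is_min_phi_zero A C r x y d' -> d = d'.
Proof.
move=> [h1 h2 h3 h4] [h1' h2' h3' h4'].
case: (ltrgtP d d') => // H.
- by exfalso; exact: (h4' d h1 H h3).
- by exfalso; exact: (h4 d' h1' H h3').
Qed.

Lemma exists_g x y r : P x y r -> exists g, [/\ P x y g, (forall m, (m < g)%N -> ~~ P x y m) & (g <= r)%N].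
Proof.
move=> Pr; have ex : exists n, P x y n by exists r.
case: (ex_minnP ex) => g Pg Hm; exists g; split => //.
- by move=> m Hmg; apply/negP => /Hm; rewrite leqNgt Hmg.
- exact: Hm.
Qed.

End Aux.

Theorem lemma2 (F : finFieldType) (L : closedFieldType)
  (iota : {rmorphism F -> L})
  (HalgL : forall z : L, exists P : {poly F}, P != 0 /\ root (map_poly iota P) z)
  (Hchar : (2%N \notin [pchar F]))
  (a c : F) (Ha : a != 0) (r k : nat) (Hr : (1 <= r)%N) (Hk : (2 <= k)%N)
  (x : 'I_k -> L)
  (Hx : forall i j : 'I_k, fiter (iota a) (iota c) r (x i) = fiter (iota a) (iota c) r (x j)) :
  (forall i j : 'I_k, i != j ->
     exists d : int, is_min_phi_zero (iota a) (iota c) r (x i) (x j) d)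
  /\
  (forall w : 'I_k -> 'I_k -> int,
     (forall i j : 'I_k, i != j ->
        is_min_phi_zero (iota a) (iota c) r (x i) (x j) (w i j)) ->
     proper_graph w).
Proof.
have HA : iota a != 0 by rewrite fmorph_eq0.
have Pr : forall i j, @P L (iota a) (iota c) (x i) (x j) r by move=> i j; rewrite /P (Hx i j).
split.
  move=> i j _; have [g [H1 H2 H3]] := exists_g (Pr i j).
  by exists (g%:Z - 1); apply: charac.
move=> w Hw u v t Huv Hut Hvt.
have [g1 [P1 M1 R1]] := exists_g (Pr u v).
have [g2 [P2 M2 R2]] := exists_g (Pr u t).
have [g3 [P3 M3 R3]] := exists_g (Pr v t).
have -> : w u v = g1%:Z - 1 by apply: min_uniq (Hw _ _ Huv) (charac HA P1 M1 R1).
have -> : w u t = g2%:Z - 1 by apply: min_uniq (Hw _ _ Hut) (charac HA P2 M2 R2).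
have -> : w v t = g3%:Z - 1 by apply: min_uniq (Hw _ _ Hvt) (charac HA P3 M3 R3).
move=> L12 L23.
have g12 : (g1 <= g2)%N by lia.
have g23 : (g2 <= g3)%N by lia.
have g32 : (g3 <= g2)%N.
  rewrite leqNgt; apply/negP => /M3; rewrite (P_trans (P_mono g12 P1) P2) //.
have E23 : g2 = g3 by lia.
case: (ltnP g1 g2) => H12.
  by right; split; [lia| rewrite E23].
have E12 : g1 = g2 by lia.
case: g2 E12 E23 P2 M2 R2 g12 g23 g32 H12 L12 L23 => [|n] E12 E23 P2 M2 R2 g12 g23 g32 H12 L12 L23.
  by left; subst; split.
exfalso.
subst g1 g3.
move: P1 P2; rewrite /P !fiterS => /eqP /(fquad_eq HA) [H|H1] /eqP /(fquad_eq HA) [H'|H2].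
- by move: (M1 n (ltnSn n)); rewrite /P H eqxx.
- by move: (M1 n (ltnSn n)); rewrite /P H eqxx.
- by move: (M2 n (ltnSn n)); rewrite /P H' eqxx.
have : fiter (iota a) (iota c) n (x v) = fiter (iota a) (iota c) n (x t).
  by apply: (addrI (fiter (iota a) (iota c) n (x u))); rewrite H1 H2.
by move=> H; move: (M3 n (ltnSn n)); rewrite /P H eqxx.
Qed.
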